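(* Let $f=\|\cdot\|$ be an arbitrary (not necessarily Euclidean) norm on $\mathbb{R}^n$. Then: (i) for every $v\in\partial f(0)$, $f$ is twice epi-differentiable at $0$ for $v$ and $d^2f(0|v)=\delta_{K(0,v)}$; (ii) for $v\in\partial f(0)$, $f$ is generalized twice differentiable at $0$ for $v$ if and only if $v\in\operatorname{int}\partial f(0)$.
   Context: $\partial f$ is the convex subdifferential. First subderivative: $df(\bar x)(w)=\liminf_{t\downarrow0,w'\to w}\frac{f(\bar x+tw')-f(\bar x)}{t}$; critical cone $K(\bar x,\bar v)=\{w:df(\bar x)(w)=\langle\bar v,w\rangle\}$. $\delta_C$ is the indicator of $C$ ($0$ on $C$, $\infty$ off $C$). Second subderivative $d^2f(\bar x|\bar v)(w)=\liminf_{t\downarrow0,w'\to w}\Delta^2_tf(\bar x|\bar v)(w')$ with $\Delta_t^2f(\bar x|\bar v)(w)=\frac{f(\bar x+tw)-f(\bar x)-t\langle\bar v,w\rangle}{\frac12t^2}$; twice epi-differentiability at $\bar x$ for $\bar v$ means $\Delta_t^2f(\bar x|\bar v)$ epi-converges as $t\downarrow0$. A generalized quadratic form is $\frac12\langle\cdot,A\cdot\rangle+\delta_L$, $A$ symmetric, $L$ a linear subspace; generalized twice differentiability at $\bar x$ for $\bar v\in\partial f(\bar x)$ means twice epi-differentiability with $d^2f(\bar x|\bar v)$ a generalized quadratic form. *)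

(* Defs.v *)
(* R^n is modelled as row vectors 'rV[R]_n
   with their standard (product) topology. *)
From HB Require Import structures.
From mathcomp Require Import all_boot all_order all_algebra.
From mathcomp Require Import all_classical all_reals all_analysis.
Set Implicit Arguments. Unset Strict Implicit. Unset Printing Implicit Defensive.
Import Order.TTheory GRing.Theory Num.Theory.
Import numFieldNormedType.Exports.
Local Open Scope classical_set_scope.
Local Open Scope ring_scope.

Section Defs.
Variables (R : realType) (n : nat).
Notation V := 'rV[R]_n.

Definition dotp (v w : V) : R := \sum_(i < n) v ord0 i * w ord0 i.

Definition is_norm (f : V -> R) : Prop :=
  [/\ forall x, f x = 0 -> x = 0,
      forall (a : R) x, f (a *: x) = `|a| * f x &
      forall x y, f (x + y) <= f x + f y].

Definition subdiff (f : V -> R) (x : V) : set V :=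
  [set v | forall y, f x + dotp v (y - x) <= f y].

(* liminf_{t \downarrow 0, w' -> w} g t w' *)
Definition liminf_tw (g : R -> V -> \bar R) (w : V) : \bar R :=
  ereal_sup [set ereal_inf [set g t w' | t in [set t | 0 < t < e] & w' in [set w' | `|w' - w| < e]]
            | e in [set e : R | 0 < e]].

Definition subderiv1 (f : V -> R) (x w : V) : \bar R :=
  liminf_tw (fun t w' => ((f (x + t *: w') - f x) / t)%:E) w.

Definition crit_cone (f : V -> R) (x v : V) : set V :=
  [set w | subderiv1 f x w = (dotp v w)%:E].

Definition indicator (C : set V) (w : V) : \bar R :=
  if `[< C w >] then 0%E else +oo%E.

Definition diffq2 (f : V -> R) (x v : V) (t : R) (w : V) : \bar R :=
  ((f (x + t *: w) - f x - t * dotp v w) / (t ^+ 2 / 2))%:E.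

Definition subderiv2 (f : V -> R) (x v w : V) : \bar R :=
  liminf_tw (diffq2 f x v) w.

(* epi-convergence of phi_t to phi0 as t \downarrow 0
   (sequential characterization, Rockafellar-Wets Prop. 7.2,
   required along every sequence t_k \downarrow 0) *)
Definition epi_conv (phi : R -> V -> \bar R) (phi0 : V -> \bar R) : Prop :=
  forall w : V,
    (forall (t : R^nat) (w_ : nat -> V), (forall k, 0 < t k) -> t @ \oo --> 0 ->
        w_ @ \oo --> w -> (phi0 w <= limn_einf (fun k => phi (t k) (w_ k)))%E) /\
    (forall t : R^nat, (forall k, 0 < t k) -> t @ \oo --> 0 ->
        exists w_ : nat -> V, w_ @ \oo --> w /\
          (limn_esup (fun k => phi (t k) (w_ k)) <= phi0 w)%E).

Definition twice_epi_diff (f : V -> R) (x v : V) : Prop :=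
  exists phi0, epi_conv (diffq2 f x v) phi0.

(* generalized quadratic form: 1/2 <w, A w> + delta_L, A symmetric,
   L a linear subspace (represented as the row space of a matrix) *)
Definition gen_quad_form (phi : V -> \bar R) : Prop :=
  exists (A L : 'M[R]_n), A^T = A /\
    forall w, phi w = if (w <= L)%MS then ((w *m A *m w^T) ord0 ord0 / 2)%:E
                      else +oo%E.

Definition gen_twice_diff (f : V -> R) (x v : V) : Prop :=
  subdiff f x v /\ twice_epi_diff f x v /\ gen_quad_form (subderiv2 f x v).

End Defs.

(* Main.v *)
Require Import Defs.
From HB Require Import structures.
From mathcomp Require Import all_boot all_order all_algebra.
From mathcomp Require Import all_classical all_reals all_analysis.
From mathcomp Require Import ring lra.
Import Order.TTheory GRing.Theory Num.Theory.
Import numFieldNormedType.Exports.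
Local Open Scope classical_set_scope.
Local Open Scope ring_scope.
Set Implicit Arguments. Unset Strict Implicit. Unset Printing Implicit Defensive.

Section Basics.
Variables (R : realType) (n : nat).
Notation V := 'rV[R]_n.
Implicit Types (u v w x y : V).

Lemma dotpDr u x y : dotp u (x + y) = dotp u x + dotp u y.
Proof. by rewrite /dotp -big_split /=; apply: eq_bigr => i _; rewrite mxE mulrDr. Qed.

Lemma dotpZr u (a : R) x : dotp u (a *: x) = a * dotp u x.
Proof. by rewrite /dotp mulr_sumr; apply: eq_bigr => i _; rewrite mxE mulrCA. Qed.

Lemma dotpNr u x : dotp u (- x) = - dotp u x.
Proof. by rewrite -scaleN1r dotpZr mulN1r. Qed.

Lemma dotpBl u v x : dotp (u - v) x = dotp u x - dotp v x.
Proof. by rewrite /dotp -sumrB; apply: eq_bigr => i _; rewrite !mxE mulrBl. Qed.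

Lemma dotp0r u : dotp u 0 = 0.
Proof. by rewrite -(scale0r 0) dotpZr mul0r. Qed.

Lemma norm_coord x i : `|x ord0 i| <= `|x|.
Proof.
have -> : `|x| = mx_norm x by []. rewrite mx_normrE.
by apply/bigmax_geP; right => /=; exists (ord0, i).
Qed.

Lemma dotp_bound u x : `|dotp u x| <= n%:R * `|u| * `|x|.
Proof.
rewrite /dotp (le_trans (ler_norm_sum _ _ _)) //.
have -> : n%:R * `|u| * `|x| = \sum_(i < n) (`|u| * `|x|).
  by rewrite sumr_const card_ord -mulrA mulr_natl.
apply: ler_sum => i _; rewrite normrM.
by apply: ler_pM => //; apply: norm_coord.
Qed.

Lemma dotp_self_gt0 x : x != 0 -> 0 < dotp x x.
Proof.
move=> x0; rewrite lt_def; apply/andP; split; last first.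
  by apply: sumr_ge0 => i _; rewrite -expr2 sqr_ge0.
apply: contra x0 => /eqP h; apply/eqP/rowP => i; rewrite mxE.
have := @psumr_eq0P _ _ xpredT (fun i => x ord0 i * x ord0 i).
move=> /(_ (fun i _ => ltac:(rewrite -expr2; exact: sqr_ge0)) h i isT).
by move/eqP; rewrite mulf_eq0 orbb => /eqP.
Qed.


Variable f : V -> R.
Hypothesis hf : is_norm f.

Lemma fZ (a : R) x : f (a *: x) = `|a| * f x.
Proof. by case: hf. Qed.
Lemma fD x y : f (x + y) <= f x + f y.
Proof. by case: hf. Qed.
Lemma f_eq0 x : f x = 0 -> x = 0.
Proof. by case: hf => h _ _; apply: h. Qed.
Lemma f0 : f 0 = 0.
Proof. by rewrite -(scale0r 0) fZ normr0 mul0r. Qed.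
Lemma fN x : f (- x) = f x.
Proof. by rewrite -scaleN1r fZ normrN normr1 mul1r. Qed.
Lemma f_ge0 x : 0 <= f x.
Proof.
have := fD x (- x); rewrite subrr f0 fN => h; lra.
Qed.

Lemma f_bound : exists C, 0 <= C /\ forall x, f x <= C * `|x|.
Proof.
exists (\sum_(i < n) f (delta_mx ord0 i)); split.
  by apply: sumr_ge0 => i _; apply: f_ge0.
move=> x; rewrite {1}(matrix_sum_delta x) big_ord1 mulr_suml.
elim/big_rec2 : _ => [|i a b _ IH]; first by rewrite f0.
apply: le_trans (fD _ _) _; apply: lerD => //.
by rewrite fZ mulrC; apply: ler_wpM2l; [apply: f_ge0|apply: norm_coord].
Qed.

Lemma f_lip : exists C, 0 <= C /\ forall x y, `|f x - f y| <= C * `|x - y|.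
Proof.
have [C [C0 hC]] := f_bound; exists C; split => // x y.
have h1 := fD (x - y) y; rewrite subrK in h1.
have h2 := fD (y - x) x; rewrite subrK -opprB fN in h2.
have h3 := hC (x - y).
by rewrite ler_norml; apply/andP; split; lra.
Qed.
End Basics.
Section Liminf.
Variables (R : realType) (n : nat).
Notation V := 'rV[R]_n.

Lemma liminf_ext (g g' : R -> V -> \bar R) w :
  (forall t w', 0 < t -> g t w' = g' t w') -> liminf_tw g w = liminf_tw g' w.
Proof.
move=> hg; rewrite /liminf_tw; congr ereal_sup; apply/seteqP; split.
  move=> _ [e e0 <-]; exists e => //; congr ereal_inf; apply/seteqP; split.
    move=> _ [t ht [w' hw' <-]]; exists t => //.
    by exists w' => //; rewrite hg //; case/andP: ht.
  move=> _ [t ht [w' hw' <-]]; exists t => //.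
  by exists w' => //; rewrite hg //; case/andP: ht.
move=> _ [e e0 <-]; exists e => //; congr ereal_inf; apply/seteqP; split.
  move=> _ [t ht [w' hw' <-]]; exists t => //.
  by exists w' => //; rewrite hg //; case/andP: ht.
move=> _ [t ht [w' hw' <-]]; exists t => //.
by exists w' => //; rewrite hg //; case/andP: ht.
Qed.

Lemma liminf_le (g : R -> V -> \bar R) w (x : \bar R) :
  (forall e, 0 < e -> exists2 t, 0 < t < e & (g t w <= x)%E) ->
  (liminf_tw g w <= x)%E.
Proof.
move=> h; apply: ge_ereal_sup => _ [e e0 <-].
have [t ht gt] := h e e0; apply: ge_ereal_inf.
by exists (g t w) => //; exists t => //; exists w => //=; rewrite subrr normr0.
Qed.

Lemma liminf_ge (g : R -> V -> \bar R) w (x : \bar R) e : 0 < e ->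
  (forall t w', 0 < t < e -> `|w' - w| < e -> (x <= g t w')%E) ->
  (x <= liminf_tw g w)%E.
Proof.
move=> e0 h; apply: le_ereal_sup_tmp; exists (ereal_inf
  [set g t w' | t in [set t | 0 < t < e] & w' in [set w' | `|w' - w| < e]]).
  by exists e.
by apply: le_ereal_inf_tmp => _ [t ht [w' hw' <-]]; apply: h.
Qed.

Lemma liminf_val (G : V -> R) w :
  (forall eps, 0 < eps -> exists2 d, 0 < d &
     forall w', `|w' - w| < d -> G w - eps <= G w') ->
  liminf_tw (fun t w' => (G w')%:E) w = (G w)%:E.
Proof.
move=> hG; apply/eqP; rewrite eq_le; apply/andP; split.
  apply: liminf_le => e e0; exists (e / 2) => //.
  by rewrite divr_gt0 //= ltr_pdivrMr // ltr_pMr // ltr1n.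
apply/lee_subgt0Pr => eps eps0; have [d d0 hd] := hG eps eps0.
apply: (@liminf_ge _ _ _ d d0) => t w' _ hw'; rewrite -EFinB lee_fin; exact: hd.
Qed.

Lemma liminf_zero (H : V -> R) w :
  (forall w', 0 <= H w') -> H w = 0 ->
  liminf_tw (fun t w' => (H w' / t)%:E) w = 0%E.
Proof.
move=> H0 Hw; apply/eqP; rewrite eq_le; apply/andP; split.
  apply: liminf_le => e e0; exists (e / 2); last by rewrite Hw mul0r.
  by rewrite divr_gt0 //= ltr_pdivrMr // ltr_pMr // ltr1n.
apply: (@liminf_ge _ _ _ 1) => // t w' /andP[t0 _] _.
by rewrite lee_fin divr_ge0 // ltW.
Qed.

Lemma ge_all_pinfty (x : \bar R) : (forall M : R, 0 < M -> (M%:E <= x)%E) -> x = +oo%E.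
Proof.
case: x => [r| |] // h.
  have h1 := ler_norm r.
  have h2 := h (`|r| + 1) (ltr_pwDr ltr01 (normr_ge0 r)).
  rewrite lee_fin in h2; exfalso; lra.
by have := h 1 ltr01.
Qed.

Lemma pinfty_bound (H : V -> R) w (L : R) :
  0 < H w -> 0 <= L ->
  (forall w', H w - L * `|w' - w| <= H w') ->
  forall M, 0 < M -> exists2 e, 0 < e &
    forall t w', 0 < t < e -> `|w' - w| < e -> M <= H w' / t.
Proof.
move=> Hw L0 HL M M0.
pose e := H w / (2 * ((L + 1) * (M + 1))).
have den0 : 0 < 2 * ((L + 1) * (M + 1)) by rewrite !mulr_gt0 //; lra.
have e0 : 0 < e by rewrite divr_gt0.
have eE : e * (2 * ((L + 1) * (M + 1))) = H w by rewrite divfK // gt_eqF.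
exists e => // t w' /andP[t0 te] hw'.
have h1 : H w / 2 <= H w'.
  apply: le_trans (HL w'); suff : L * `|w' - w| <= H w / 2 by lra.
  apply: le_trans (_ : L * e <= _); first by apply: ler_wpM2l => //; apply: ltW.
  rewrite -eE.
  have : 0 <= L * e * M by apply: mulr_ge0; [apply: mulr_ge0|]; lra.
  have : 0 <= e * M by apply: mulr_ge0; lra.
  have : 0 <= e by exact: ltW.
  nra.
rewrite ler_pdivlMr //.
apply: le_trans h1; apply: le_trans (_ : M * e <= _).
  by apply: ler_wpM2l; [apply: ltW | apply: ltW].
rewrite -eE.
have : 0 <= L * e * M by apply: mulr_ge0; [apply: mulr_ge0|]; lra.
have : 0 <= e * M by apply: mulr_ge0; lra.
have : 0 <= e by exact: ltW.
have : 0 <= L * e by apply: mulr_ge0; lra.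
nra.
Qed.

Lemma liminf_pinfty (H : V -> R) w (L : R) :
  0 < H w -> 0 <= L ->
  (forall w', H w - L * `|w' - w| <= H w') ->
  liminf_tw (fun t w' => (H w' / t)%:E) w = +oo%E.
Proof.
move=> Hw L0 HL; apply: ge_all_pinfty => M M0.
have [e e0 he] := @pinfty_bound H w L Hw L0 HL M M0.
apply: (@liminf_ge _ _ _ e e0) => t w' ht hw'.
by rewrite lee_fin; apply: he.
Qed.

Lemma limn_einf_ge (u : (\bar R)^nat) (x : \bar R) N :
  (forall k, (N <= k)%N -> (x <= u k)%E) -> (x <= limn_einf u)%E.
Proof.
move=> h; rewrite limn_einf_lim (cvg_lim _ (@cvg_einfs_sup _ u)) //.
apply: le_ereal_sup_tmp; exists (einfs u N); first by exists N.
apply: le_ereal_inf_tmp => _ [k /= Nk <-]; exact: h.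
Qed.

Lemma limn_esup_le (u : (\bar R)^nat) (x : \bar R) :
  (forall k, (u k <= x)%E) -> (limn_esup u <= x)%E.
Proof.
move=> h; rewrite limn_esup_lim (cvg_lim _ (@cvg_esups_inf _ u)) //.
apply: ge_ereal_inf; exists (esups u 0); first by exists 0%N.
apply: ge_ereal_sup => _ [k /= _ <-]; exact: h.
Qed.

End Liminf.

Section Main.
Variables (R : realType) (n : nat).
Notation V := 'rV[R]_n.
Variable f : V -> R.
Hypothesis hf : is_norm f.
Variable v : V.
Hypothesis hv : subdiff f 0 v.

Definition hh (w : V) := f w - dotp v w.

Lemma hh_ge0 w : 0 <= hh w.
Proof. by have := hv w; rewrite f0 // add0r subr0 /hh subr_ge0. Qed.

Lemma hh0 : hh 0 = 0.
Proof. by rewrite /hh f0 // dotp0r subr0. Qed.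

Lemma hhZ (a : R) w : 0 <= a -> hh (a *: w) = a * hh w.
Proof. by move=> a0; rewrite /hh fZ // dotpZr ger0_norm // mulrBr. Qed.

Lemma hh_lip : exists2 L, 0 <= L & forall x y, `|hh x - hh y| <= L * `|x - y|.
Proof.
have [C [C0 hC]] := @f_lip _ _ _ hf.
exists (C + n%:R * `|v|); first by rewrite addr_ge0 // mulr_ge0.
move=> x y; rewrite /hh.
have -> : f x - dotp v x - (f y - dotp v y) = (f x - f y) - dotp v (x - y).
  by rewrite dotpDr dotpNr; ring.
apply: le_trans (ler_normB _ _) _; rewrite mulrDl lerD //.
exact: dotp_bound.
Qed.

Lemma diffq2E t w : 0 < t -> diffq2 f 0 v t w = ((2 * hh w) / t)%:E.
Proof.
move=> t0; rewrite /diffq2 add0r f0 // subr0 fZ // gtr0_norm // /hh.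
congr EFin; field; by rewrite gt_eqF.
Qed.

Lemma subderiv1E w : subderiv1 f 0 w = (f w)%:E.
Proof.
rewrite /subderiv1 (@liminf_ext _ _ _ (fun t w' => (f w')%:E)); last first.
  move=> t w' t0; rewrite add0r f0 // subr0 fZ // gtr0_norm //.
  by rewrite mulrC mulKf // gt_eqF.
apply: liminf_val => eps eps0.
have [C [C0 hC]] := @f_lip _ _ _ hf.
exists (eps / (C + 1)); first by rewrite divr_gt0 //; lra.
move=> w' hw'.
have h1 := hC w' w.
have h2 : C * `|w' - w| <= eps.
  apply: le_trans (_ : (C + 1) * `|w' - w| <= _).
    by rewrite ler_wpM2r //; lra.
  by rewrite mulrC -ler_pdivlMr; [apply: ltW | lra].
move: h1; rewrite ler_norml => /andP[h1 _]; lra.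
Qed.

Lemma crit_coneE w : crit_cone f 0 v w <-> hh w = 0.
Proof.
rewrite /crit_cone /= subderiv1E /hh; split.
  by move=> [->]; rewrite subrr.
by move/eqP; rewrite subr_eq0 => /eqP ->.
Qed.

Lemma subderiv2E w : subderiv2 f 0 v w = if hh w == 0 then 0%E else +oo%E.
Proof.
rewrite /subderiv2 (@liminf_ext _ _ _ (fun t w' => ((2 * hh w') / t)%:E)); last first.
  by move=> t w' t0; rewrite diffq2E.
have [L L0 hL] := hh_lip.
case: eqP => hw.
  apply: liminf_zero; last by rewrite hw mulr0.
  by move=> w'; rewrite mulr_ge0 // hh_ge0.
apply: (@liminf_pinfty _ _ _ _ (2 * L)).
- by rewrite mulr_gt0 // lt_def hh_ge0 andbT; apply/eqP.
- by rewrite mulr_ge0.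
- move=> w'; have := hL w w'; rewrite ler_norml => /andP[_ h1].
  rewrite distrC in h1; lra.
Qed.


Lemma part1 : twice_epi_diff f 0 v /\ subderiv2 f 0 v = indicator (crit_cone f 0 v).
Proof.
split; last first.
  apply/funext => w; rewrite subderiv2E /indicator.
  case: eqP => hw; [rewrite asboolT // | rewrite asboolF //]; exact/crit_coneE.
exists (subderiv2 f 0 v) => w; split.
  move=> t w_ t0 tcvg wcvg; rewrite subderiv2E; case: eqP => hw.
    apply: (@limn_einf_ge _ _ _ 0) => k _; rewrite diffq2E // lee_fin.
    by apply: divr_ge0; [rewrite mulr_ge0 // hh_ge0 | apply: ltW].
  have [L L0 hL] := hh_lip.
  have Hw : 0 < 2 * hh w by rewrite mulr_gt0 // lt_def hh_ge0 andbT; apply/eqP.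
  have HL : forall w', 2 * hh w - 2 * L * `|w' - w| <= 2 * hh w'.
    move=> w'; have := hL w w'; rewrite ler_norml => /andP[_ h1].
    rewrite distrC in h1; lra.
  have L20 : 0 <= 2 * L by rewrite mulr_ge0.
  rewrite leye_eq; apply/eqP; apply: ge_all_pinfty => M M0.
  have [e e0 he] := @pinfty_bound _ _ (fun w => 2 * hh w) w (2 * L) Hw L20 HL M M0.
  have [N _ hN] := filterI (cvgr_dist_lt _ _ tcvg _ e0) (cvgr_dist_lt _ _ wcvg _ e0).
  apply: (@limn_einf_ge _ _ _ N) => k Nk.
  have [h1 h2] := hN k Nk.
  rewrite diffq2E // lee_fin; apply: he.
    by rewrite t0 /=; move: h1; rewrite /= sub0r normrN gtr0_norm.
  by rewrite distrC.
move=> t t0 tcvg; exists (fun=> w); split; first exact: cvg_cst.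
rewrite subderiv2E; case: eqP => hw; last by rewrite leey.
by apply: limn_esup_le => k; rewrite diffq2E // hw mulr0 mul0r.
Qed.


Lemma dotpDl (u x y : V) : dotp (u + x) y = dotp u y + dotp x y.
Proof. by rewrite /dotp -big_split /=; apply: eq_bigr => i _; rewrite mxE mulrDl. Qed.

Lemma dotpZl (a : R) (u y : V) : dotp (a *: u) y = a * dotp u y.
Proof. by rewrite /dotp mulr_sumr; apply: eq_bigr => i _; rewrite mxE mulrA. Qed.

Lemma interiorP :
  interior (subdiff f 0) v <-> exists2 e, 0 < e & forall u, `|v - u| < e -> subdiff f 0 u.
Proof.
rewrite /interior /= nbhs_ballP; split => -[e e0 he]; exists e => //.
  by move=> u hu; apply: he; rewrite -ball_normE.
by move=> u; rewrite -ball_normE; apply: he.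
Qed.

Lemma interior_hh0 w : interior (subdiff f 0) v -> hh w = 0 -> w = 0.
Proof.
move=> /interiorP [e e0 he] hw; apply/eqP; apply/negP => /negP w0.
have nw : 0 < `|w| by rewrite normr_gt0.
pose c := e / (2 * `|w|).
have c0 : 0 < c by rewrite divr_gt0 // mulr_gt0.
have : subdiff f 0 (v + c *: w).
  apply: he; rewrite opprD addrA subrr add0r normrN normrZ gtr0_norm //.
  have : c * (2 * `|w|) = e by rewrite /c divfK // gt_eqF // mulr_gt0.
  lra.
move=> /(_ w); rewrite f0 // add0r subr0 dotpDl dotpZl.
have : f w = dotp v w by move: hw; rewrite /hh => /eqP; rewrite subr_eq0 => /eqP.
have := dotp_self_gt0 w0.
have := mulr_gt0 c0 (dotp_self_gt0 w0).
lra.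
Qed.


Lemma part2_if : interior (subdiff f 0) v -> gen_twice_diff f 0 v.
Proof.
move=> vi; split => //; split; first by case: part1.
exists 0, 0; split; first exact: trmx0.
move=> w; rewrite subderiv2E submx0; case: (eqVneq w 0) => [->|w0].
  by rewrite hh0 eqxx mulmx0 mul0mx mxE mul0r.
case: eqP => // /(interior_hh0 vi) w0'.
by rewrite w0' eqxx in w0.
Qed.

Lemma hh_opp w : hh w = 0 -> hh (- w) = 0 -> w = 0.
Proof.
rewrite /hh fN // dotpNr => h1 h2; apply: (f_eq0 hf); lra.
Qed.

Lemma gen_hh0 w : gen_twice_diff f 0 v -> hh w = 0 -> w = 0.
Proof.
move=> [_ [_ [A [L [_ hAL]]]]] hw.
have := hAL w; rewrite subderiv2E hw eqxx.
case: ifP => // wL _.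
have : (- w <= L)%MS by rewrite (eqmx_opp w).
move=> wL'; have := hAL (- w); rewrite subderiv2E wL'.
by case: eqP => // hw' _; apply: hh_opp.
Qed.

Lemma lip_cont (F : V -> R) (K : R) : 0 <= K ->
  (forall x y, `|F x - F y| <= K * `|x - y|) -> continuous F.
Proof.
move=> K0 hK x; apply/(@cvgrPdist_lt _ _ _ _ (nbhs_filter x)) => e e0.
apply/nbhs_ballP; exists (e / (K + 1)); first by rewrite /= divr_gt0 //; lra.
move=> y; rewrite -ball_normE /= => hy.
apply: le_lt_trans (hK x y) _.
apply: le_lt_trans (_ : (K + 1) * `|x - y| < e).
  by rewrite ler_wpM2r //; lra.
by rewrite mulrC -ltr_pdivlMr //; lra.
Qed.


Lemma hh_coercive : (forall w, hh w = 0 -> w = 0) ->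
  exists2 d, 0 < d & forall w, d * `|w| <= hh w.
Proof.
move=> hz.
have hpos : forall w, w != 0 -> 0 < hh w.
  move=> w w0; rewrite lt_def hh_ge0 andbT; apply/eqP => /hz /eqP.
  by rewrite (negbTE w0).
have [L L0 hL] := hh_lip.
pose D w := hh w + `|1 - `|w| |.
have Dpos : forall w, 0 < D w.
  move=> w; rewrite /D; case: (eqVneq `|w| 1) => [w1|w1].
    rewrite w1 subrr normr0 addr0; apply: hpos.
    by rewrite -normr_gt0 w1 ltr01.
  apply: ltr_wpDl; first exact: hh_ge0.
  by rewrite normr_gt0 subr_eq0 eq_sym.
have Dlip : forall x y, `|D x - D y| <= (L + 1) * `|x - y|.
  move=> x y; rewrite /D.
  have a := hL x y.
  have b := ler_dist_dist (1 - `|x|) (1 - `|y|).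
  have c := ler_dist_dist y x.
  have e : `|hh x + `|1 - `|x| | - (hh y + `|1 - `|y| |)| <=
      `|hh x - hh y| + `| `|1 - `|x| | - `|1 - `|y| | |.
    have -> : hh x + `|1 - `|x| | - (hh y + `|1 - `|y| |) =
      (hh x - hh y) + (`|1 - `|x| | - `|1 - `|y| |) by ring.
    exact: ler_normD.
  rewrite distrC in c.
  move: b; rewrite (_ : 1 - `|x| - (1 - `|y|) = `|y| - `|x|); last by ring.
  lra.
have Dc : continuous D.
  by apply: (@lip_cont _ (L + 1)) => //; lra.
have gc : continuous (fun w => (D w)^-1).
  move=> x; apply: continuousV; last exact: Dc.
  by rewrite gt_eqF.
pose Q := [set w : V | forall i, `[-1, 1]%classic (w ord0 i)].
have Qc : compact Q.
  have := @rV_compact R n (fun=> `[-1, 1]%classic) (fun=> @segment_compact R (-1) 1). exact.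
have := continuous_compact (continuous_subspaceT gc) Qc.
move/compact_bounded => [M [_ hM]].
have B0 : 0 < `|M| + 1 by rewrite ltr_pwDr.
have hB := hM (`|M| + 1) (le_lt_trans (ler_norm M) (ltr_pwDr ltr01 (lexx _))).
exists (`|M| + 1)^-1; first by rewrite invr_gt0.
move=> w; case: (eqVneq w 0) => [->|w0].
  by rewrite normr0 mulr0 hh0.
have nw : 0 < `|w| by rewrite normr_gt0.
pose u := `|w|^-1 *: w.
have nu : `|u| = 1 by rewrite normrZ normrV ?unitfE ?gt_eqF // normr_id mulVf // gt_eqF.
have wu : w = `|w| *: u by rewrite scalerA divff ?gt_eqF // scale1r.
have Qu : Q u.
  move=> i; rewrite /= in_itv /= -ler_norml -nu; exact: norm_coord.
have := hB ((D u)^-1) (ex_intro2 _ _ u Qu erefl).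
rewrite /D nu subrr normr0 addr0 /= ger0_norm; last by rewrite invr_ge0 hh_ge0.
move=> hu.
have hu0 : 0 < hh u by apply: hpos; apply/eqP => u0; move: nu; rewrite u0 normr0 => /eqP; rewrite eq_sym oner_eq0.
rewrite [in leRHS]wu hhZ; last exact: ltW.
rewrite mulrC ler_pM2l // -(invrK (hh u)) lef_pV2 ?posrE ?invr_gt0 //.
Qed.


Lemma coercive_interior : (exists2 d, 0 < d & forall w, d * `|w| <= hh w) ->
  interior (subdiff f 0) v.
Proof.
move=> [d d0 hd]; apply/interiorP.
have N0 : 0 <= n%:R :> R by [].
exists (d / (n%:R + 1)); first by rewrite divr_gt0 //; lra.
move=> u hu y; rewrite f0 // add0r subr0.
have h1 := dotp_bound (u - v) y.
have h2 := hd y.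
have h3 : dotp (u - v) y = dotp u y - dotp v y by rewrite dotpBl.
move: hu; rewrite distrC ltr_pdivlMr; last by lra.
move=> h4; move: h2; rewrite /hh => h2.
have h5 : (n%:R) * `|u - v| * `|y| <= d * `|y|.
  apply: ler_wpM2r => //; nra.
move: h1; rewrite ler_norml => /andP[_ h1]; lra.
Qed.

Lemma part2 : gen_twice_diff f 0 v <-> interior (subdiff f 0) v.
Proof.
split; last exact: part2_if.
move=> g; apply: coercive_interior; apply: hh_coercive => w; exact: gen_hh0.
Qed.

End Main.

Unset Implicit Arguments.

Theorem theorem4p3 (R : realType) (n : nat) (f : 'rV[R]_n -> R) :
  is_norm f ->
  (forall v, subdiff f 0 v ->
     twice_epi_diff f 0 v /\
     subderiv2 f 0 v = indicator (crit_cone f 0 v)) /\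
  (forall v, subdiff f 0 v ->
     (gen_twice_diff f 0 v <-> (interior (subdiff f 0 : set 'rV[R]_n)) v)).
Proof.
move=> hf; split => v hv; [exact: part1 | exact: part2].
Qed.
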